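(* Let $\mathcal E\subset\mathcal L^n$ contain all balls and let $\diamond:\mathcal E\to\mathcal L^n$ be sequentially approximable on $\mathcal E$ by polarizations. Then there is a hyperplane $H$ such that for each ball $B$ in $\mathbb{R}^n$, $\diamond B=\diamond B^\dagger$ up to a null set, where $B^\dagger$ is the reflection of $B$ in $H$. Consequently, translations, Brock set maps with parameter $b\in(0,1]$, and Solynin set maps (with respect to arbitrary hyperplanes) are not sequentially approximable on $\mathcal E$ by polarizations.
   Context: $\mathcal L^n$: measurable subsets of $\mathbb{R}^n$ of finite measure. Set polarization with respect to an oriented hyperplane $H$ (closed halfspaces $H^\pm$, reflection $A^\dagger$): $(P_HA)\cap H^+=(A\cup A^\dagger)\cap H^+$, $(P_HA)\cap H^-=(A\cap A^\dagger)\cap H^-$. $\diamond$ is sequentially approximable on $\mathcal E$ by polarizations if there are polarizations $\diamond_k$ with $\|1_{(\diamond_k\circ\cdots\circ\diamond_1)A}-1_{\diamond A}\|_1\to0$ for all $A\in\mathcal E$. The Brock set map with parameter $b$ relative to $H_0=u^\perp+t_0u$ maps each ball $B(x,r)$ to $B(x+(b-1)(\langle x,u\rangle-t_0)u,r)$ (up to null sets). The Solynin set map relative to an oriented hyperplane $H_0$ acts on each line orthogonal to $H_0$, identified with $\mathbb{R}$ with $H_0$ corresponding to $t$, by $A\mapsto[t-r_A,t+r_A]\cup(A\cap[t,\infty))$ with $r_A\ge0$ chosen to preserve measure; in particular it fixes balls in $H_0^+$ and maps balls with center in the open negative side to balls centered in $H_0$. *)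

(* Defs.v *)
From HB Require Import structures.
From mathcomp Require Import all_boot all_order all_algebra.
From mathcomp Require Import all_classical all_reals all_analysis.
Set Implicit Arguments. Unset Strict Implicit. Unset Printing Implicit Defensive.
Import Order.TTheory GRing.Theory Num.Theory.
Local Open Scope classical_set_scope.
Local Open Scope ring_scope.

Section Defs.
Variables (R : realType) (n : nat).
Local Notation V := 'rV[R]_n.

Definition dotv (x y : V) : R := \sum_(i < n) x ord0 i * y ord0 i.

Definition cball (x : V) (r : R) : set V := [set y | dotv (y - x) (y - x) <= r ^+ 2].

Definition box (a b : V) : set V := [set y | forall i, a ord0 i <= y ord0 i <= b ord0 i].
Definition boxvol (a b : V) : R := \prod_(i < n) Num.max 0 (b ord0 i - a ord0 i).

Definition lebo (A : set V) : \bar R :=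
  ereal_inf [set s | exists a b : nat -> V,
     A `<=` \bigcup_k box (a k) (b k) /\
     s = (\sum_(k <oo) (boxvol (a k) (b k))%:E)%E].

Definition Lmeas (A : set V) : Prop := lebo.-caratheodory A.
Definition Ln (A : set V) : Prop := Lmeas A /\ (lebo A < +oo)%E.

Definition symdiff (A B : set V) : set V := (A `\` B) `|` (B `\` A).

(** ||1_A - 1_B||_1 = lambda^n (A symdiff B) *)
Definition L1dist (A B : set V) : \bar R := lebo (symdiff A B).

Definition null_equiv (A B : set V) : Prop := lebo (symdiff A B) = 0%E.

(** oriented hyperplanes H = u^perp + t u, |u| = 1, H^+ = {<x,u> >= t} *)
Definition ohyp : Type := (V * R)%type.
Definition is_ohyp (H : ohyp) : Prop := dotv H.1 H.1 = 1.
Definition hplus (H : ohyp) : set V := [set x | H.2 <= dotv x H.1].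
Definition hminus (H : ohyp) : set V := [set x | dotv x H.1 <= H.2].
Definition reflpt (H : ohyp) (x : V) : V := x - (2 * (dotv x H.1 - H.2)) *: H.1.
Definition reflset (H : ohyp) (A : set V) : set V := [set x | A (reflpt H x)].

Definition polarize (H : ohyp) (A : set V) : set V :=
  ((A `|` reflset H A) `&` hplus H) `|` ((A `&` reflset H A) `&` hminus H).

(** (P_{H_k} o ... o P_{H_1}) A, with H_{j+1} := hs j *)
Fixpoint polcomp (hs : nat -> ohyp) (k : nat) (A : set V) : set V :=
  match k with
  | 0 => A
  | k'.+1 => polarize (hs k') (polcomp hs k' A)
  end.

Definition seq_approx (E : set (set V)) (dm : set V -> set V) : Prop :=
  exists hs : nat -> ohyp, (forall k, is_ohyp (hs k)) /\
    forall A, E A -> (fun k => L1dist (polcomp hs k A) (dm A)) @ \oo --> 0%E.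

Definition translate (v : V) (A : set V) : set V := [set x | A (x - v)].

Definition brock_map (b : R) (H0 : ohyp) (dm : set V -> set V) : Prop :=
  forall (x : V) (r : R), 0 < r ->
    null_equiv (dm (cball x r)) (cball (x + ((b - 1) * (dotv x H0.1 - H0.2)) *: H0.1) r).

(** Solynin set map relative to H0 = (u, t): on the line w + R u (w orthogonal
    to u), identified with R via s |-> w + s u (so H0 is s = t), the slice
    A_w is mapped to [t - r, t + r] `|` (A_w `&` [t, oo)) with r >= 0 chosen
    so that the one-dimensional Lebesgue measure is preserved. *)
Definition line_slice (H0 : ohyp) (A : set V) (w : V) : set R :=
  [set s | A (w + s *: H0.1)].
Definition solynin_radius (H0 : ohyp) (A : set V) (w : V) : R :=
  inf [set r : R | 0 <= r /\
    lebesgue_measure (`[H0.2 - r, H0.2 + r]%classic `|`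
                      (line_slice H0 A w `&` `[H0.2, +oo[%classic))
    = lebesgue_measure (line_slice H0 A w)].
Definition solynin (H0 : ohyp) (A : set V) : set V :=
  [set z | let s := dotv z H0.1 in let w := z - s *: H0.1 in
     (H0.2 - solynin_radius H0 A w <= s <= H0.2 + solynin_radius H0 A w)
     \/ (H0.2 <= s /\ A z)].

End Defs.

(* Main.v *)
Require Import Defs.
From HB Require Import structures.
From mathcomp Require Import all_boot all_order all_algebra.
From mathcomp Require Import all_classical all_reals all_analysis.
From mathcomp Require Import measurable_realfun.
From mathcomp Require Import ring lra.
Import Order.TTheory GRing.Theory Num.Theory.
Local Open Scope classical_set_scope.
Local Open Scope ring_scope.

Lemma itv_meas (R : realType) (a b : R) :
  (lebesgue_measure (`[a, b]%classic : set R) = (Num.max 0 (b - a))%:E)%E.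
Proof.
rewrite lebesgue_measure_itv /=.
case: ltP => ab.
  rewrite -EFinD; congr EFin; apply/esym/max_idPr; rewrite subr_ge0 ltW //.
move: ab; rewrite lee_fin => ab.
by congr EFin; apply/esym/max_idPl; rewrite subr_le0.
Qed.

Lemma oneD (R : realType) (al be M : R) (a b c : nat -> R) :
  al <= be -> 0 <= M -> (forall k, 0 <= c k) ->
  (forall x, al <= x <= be ->
     (M%:E <= \sum_(k <oo) (c k * \1_(`[a k, b k]%classic) x)%:E)%E) ->
  ((M * (be - al))%:E <= \sum_(k <oo) (c k * Num.max 0 (b k - a k))%:E)%E.
Proof.
move=> albe M0 c0 H.
pose D : set R := `[al, be]%classic.
have mD : measurable D by exact: measurable_itv.
have f0 : forall k x, (0 <= (c k * \1_(`[a k, b k]%classic) x)%:E)%E.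
  by move=> k x; rewrite lee_fin mulr_ge0.
have mf : forall k, measurable_fun D (fun x : R => ((c k * \1_(`[a k, b k]%classic) x)%:E : \bar R)).
  move=> k; apply/measurable_EFinP; apply: measurable_funM.
    exact: measurable_cst.
  exact: measurable_indic.
apply: (@le_trans _ _ (\int[lebesgue_measure]_(x in D) (M%:E))%E).
  rewrite integral_cst //; set mm := (X in (_ * X)%E).
  have -> : mm = (Num.max 0 (be - al))%:E by exact: itv_meas.
  rewrite -EFinM lee_fin ler_wpM2l //.
  by rewrite le_max lexx orbT.
apply: (@le_trans _ _ (\int[lebesgue_measure]_(x in D)
    \sum_(k <oo) (c k * \1_(`[a k, b k]%classic) x)%:E)%E).
  apply: ge0_le_integral => //.
  apply: ge0_emeasurable_sum => //.
  move=> k _; exact: mf.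
rewrite integral_nneseries //.
apply: lee_nneseries.
  by move=> k _ _; apply: integral_ge0 => x _; exact: f0.
move=> k _.
under eq_integral do rewrite EFinM.
rewrite ge0_integralZl_EFin //.
rewrite integral_indic // EFinM lee_wpmul2l // ?lee_fin //.
  set mm := (X in (X <= _)%E).
  have := itv_meas _ (a k) (b k) => <-.
  apply: le_measure; rewrite ?inE.
  - apply: measurableI => //; exact: measurable_itv.
  - exact: measurable_itv.
  - exact: subIsetl.
apply/measurable_EFinP; exact: measurable_indic.
Qed.


Section Split.
Variables (R : realType) (n : nat).
Local Notation V := 'rV[R]_n.+1.
Definition tl (x : V) : 'rV[R]_n := \row_(j < n) x ord0 (lift ord0 j).
Definition hd (x : V) : R := x ord0 ord0.
Definition rcons1 (x1 : R) (y : 'rV[R]_n) : V :=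
  \row_(i < n.+1) (if unlift ord0 i is Some j then y ord0 j else x1).

Lemma tl_cons x1 y : tl (rcons1 x1 y) = y.
Proof. by apply/rowP => j; rewrite !mxE liftK. Qed.
Lemma hd_cons x1 y : hd (rcons1 x1 y) = x1.
Proof. by rewrite /hd mxE unlift_none. Qed.

Lemma box_split (a b x : V) :
  box a b x <-> (hd a <= hd x <= hd b /\ box (tl a) (tl b) (tl x)).
Proof.
split.
  move=> h; split; first exact: h.
  by move=> j; rewrite !mxE; exact: h.
move=> [h0 h1] i; have [j ->|->] := unliftP ord0 i; last exact: h0.
by have := h1 j; rewrite !mxE.
Qed.

Lemma boxvol_split (a b : V) :
  boxvol a b = Num.max 0 (hd b - hd a) * boxvol (tl a) (tl b).
Proof.
rewrite /boxvol big_ord_recl; congr (_ * _).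
by apply: eq_bigr => j _; rewrite !mxE.
Qed.

Lemma indic_split (a b x : V) :
  \1_(box a b) x = \1_(`[hd a, hd b]%classic) (hd x) * \1_(box (tl a) (tl b)) (tl x) :> R.
Proof.
rewrite !indicE.
have [h|h] := pselect (box a b x).
  have [h0 h1] := (box_split a b x).1 h.
  rewrite (mem_set h) (mem_set h1).
  rewrite (@mem_set _ `[hd a, hd b]%classic (hd x)) ?mulr1 //.
rewrite (memNset h).
have [h1|h1] := pselect (box (tl a) (tl b) (tl x)); last by rewrite (memNset h1) mulr0.
have [h0|h0] := pselect (hd a <= hd x <= hd b).
  by exfalso; apply: h; apply/box_split.
rewrite (@memNset _ _ (hd x)) ?mul0r //= in_itv; exact: h0.
Qed.
End Split.
Arguments tl {R n}. Arguments hd {R n}. Arguments rcons1 {R n}.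

Lemma boxlb (R : realType) (n : nat) : forall (a b : nat -> 'rV[R]_n) (w : nat -> R) (p q : 'rV[R]_n) (m : R),
 (forall k, 0 <= w k) -> 0 <= m -> (forall i, p ord0 i <= q ord0 i) ->
 (forall x, box p q x -> (m%:E <= \sum_(k <oo) (w k * \1_(box (a k) (b k)) x)%:E)%E) ->
 ((m * boxvol p q)%:E <= \sum_(k <oo) (w k * boxvol (a k) (b k))%:E)%E.
Proof.
elim: n => [|n IH] a b w p q m w0 m0 pq H.
  have bT : forall (u v x : 'rV[R]_0), box u v x by move=> u v x [].
  have v1 : forall (u v : 'rV[R]_0), boxvol u v = 1 by move=> u v; rewrite /boxvol big_ord0.
  rewrite v1 mulr1; apply: (le_trans (H p (bT _ _ _))).
  apply: lee_nneseries => [k _ _|k _]; first by rewrite lee_fin mulr_ge0 // indicE; case: (_ \in _).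
  by rewrite v1 indicE mem_set.
pose M := m * boxvol (tl p) (tl q).
have hv0 : forall (u v : 'rV[R]_n), 0 <= boxvol u v.
  by move=> u v; apply: prodr_ge0 => i _; rewrite le_max lexx.
have key : forall x1, hd p <= x1 <= hd q ->
  (M%:E <= \sum_(k <oo) ((w k * boxvol (tl (a k)) (tl (b k))) * \1_(`[hd (a k), hd (b k)]%classic) x1)%:E)%E.
  move=> x1 hx1.
  have := IH (fun k => tl (a k)) (fun k => tl (b k)) (fun k => w k * \1_(`[hd (a k), hd (b k)]%classic) x1) (tl p) (tl q) m.
  have e : forall k, (w k * \1_(`[hd (a k), hd (b k)]%classic) x1 * boxvol (tl (a k)) (tl (b k)))%:E = 
     ((w k * boxvol (tl (a k)) (tl (b k))) * \1_(`[hd (a k), hd (b k)]%classic) x1)%:E.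
    by move=> k; congr EFin; ring.
  rewrite (eq_eseriesr (fun k _ => e k)); apply => //.
  - by move=> k; rewrite mulr_ge0 // indicE; case: (_ \in _).
  - by move=> j; have := pq (lift ord0 j); rewrite !mxE.
  move=> y hy.
  have := H (rcons1 x1 y).
  have hb : box p q (rcons1 x1 y) by apply/box_split; rewrite hd_cons tl_cons.
  move=> /(_ hb); congr (_ <= _)%E; apply: eq_eseriesr => k _.
  by rewrite indic_split hd_cons tl_cons mulrA.
have M0 : 0 <= M by rewrite mulr_ge0.
have := @oneD R (hd p) (hd q) M (fun k => hd (a k)) (fun k => hd (b k))
  (fun k => w k * boxvol (tl (a k)) (tl (b k))) (pq ord0) M0
  (fun k => mulr_ge0 (w0 k) (hv0 _ _)) key.
rewrite boxvol_split.
have -> : Num.max 0 (hd q - hd p) = hd q - hd p.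
  by apply/max_idPr; rewrite subr_ge0; exact: pq.
have -> : m * ((hd q - hd p) * boxvol (tl p) (tl q)) = M * (q ord0 ord0 - p ord0 ord0).
  by rewrite /M /hd; ring.
move=> h; apply: (le_trans h); apply: lee_nneseries => k _.
  by move=> _; rewrite lee_fin !mulr_ge0 // le_max lexx.
by rewrite boxvol_split lee_fin le_eqVlt; apply/orP; left; apply/eqP; rewrite /hd; ring.
Qed.


Section Lebo.
Variables (R : realType) (n : nat).
Local Notation V := 'rV[R]_n.
Local Open Scope ereal_scope.

Lemma boxvol_ge0 (a b : V) : (0 <= boxvol a b)%R.
Proof. by apply: prodr_ge0 => i _; rewrite le_max lexx. Qed.

Lemma lebo_ge0 (A : set V) : 0 <= lebo A.
Proof.
apply: le_ereal_inf_tmp => s [a [b [_ ->]]].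
by apply: nneseries_ge0 => k _ _; rewrite lee_fin boxvol_ge0.
Qed.

Lemma lebo_mono (A B : set V) : A `<=` B -> lebo A <= lebo B.
Proof.
move=> AB; apply: ereal_inf_le_tmp => s [a [b [cov ->]]].
by exists a, b; split => //; apply: subset_trans cov.
Qed.

Lemma lebo_box (p q : V) : (forall i, p ord0 i <= q ord0 i)%R ->
  (boxvol p q)%:E <= lebo (box p q).
Proof.
move=> pq; apply: le_ereal_inf_tmp => s [a [b [cov ->]]].
have := @boxlb R n a b (fun=> 1%R) p q 1%R (fun=> ler01) ler01 pq.
rewrite mul1r.
have e : forall k, ((1 * boxvol (a k) (b k))%R)%:E = (boxvol (a k) (b k))%:E.
  by move=> k; rewrite mul1r.
rewrite (eq_eseriesr (fun k _ => e k)); apply.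
move=> x /cov [k _ hk].
rewrite (@nneseriesD1 _ _ k) //.
  rewrite indicE mem_set // mulr1 leeDl //.
  by apply: nneseries_ge0 => j _ _; rewrite lee_fin mul1r indicE; case: (_ \in _).
Qed.

Lemma sum_double (c : nat -> \bar R) N :
  \sum_(0 <= k < N.*2) c k = \sum_(0 <= k < N) (c k.*2 + c k.*2.+1).
Proof.
elim: N => [|N IH]; first by rewrite !big_geq.
by rewrite doubleS !big_nat_recr //= IH addeA.
Qed.

Definition interl (f g : nat -> \bar R) k := if odd k then g k./2 else f k./2.

Lemma interleave_le (f g : nat -> \bar R) :
  (forall k, 0 <= f k) -> (forall k, 0 <= g k) ->
  \sum_(k <oo) interl f g k <=
  \sum_(k <oo) f k + \sum_(k <oo) g k.
Proof.
move=> f0 g0; pose c := interl f g.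
have c0 : forall k, 0 <= c k by move=> k; rewrite /c /interl; case: odd.
rewrite -(nneseriesD (fun k _ _ => f0 k) (fun k _ _ => g0 k)).
apply: lime_le; first exact: is_cvg_nneseries.
apply: nearW => N.
apply: (@le_trans _ _ (\sum_(0 <= k < N.*2) c k)).
  rewrite -addnn [X in _ <= X](@big_cat_nat _ _ _ N) //= ?leq_addr //.
  by apply: leeDl; apply: sume_ge0 => k _; exact: c0.
rewrite sum_double.
have e : forall k, c k.*2 + c k.*2.+1 = f k + g k.
  by move=> k; rewrite /c /interl /= odd_double /= doubleK uphalf_double.
rewrite (eq_bigr (fun k => f k + g k)); last by move=> k _; exact: e.
by apply: nneseries_lim_ge => k _ _; rewrite adde_ge0.
Qed.

Lemma lebo_union (A B : set V) : lebo (A `|` B) <= lebo A + lebo B.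
Proof.
have [fA|iA] := boolP (lebo A \is a fin_num); last first.
  have -> : lebo A = +oo.
    move: iA (lebo_ge0 A); rewrite fin_numE negb_and !negbK.
    by case/orP => /eqP -> //; rewrite leNgt ltNy0.
  by rewrite addye ?leey // gt_eqF // (lt_le_trans _ (lebo_ge0 B)) ?ltNy0.
have [fB|iB] := boolP (lebo B \is a fin_num); last first.
  have -> : lebo B = +oo.
    move: iB (lebo_ge0 B); rewrite fin_numE negb_and !negbK.
    by case/orP => /eqP -> //; rewrite leNgt ltNy0.
  by rewrite addey ?leey // gt_eqF // (lt_le_trans _ (lebo_ge0 A)) ?ltNy0.
apply/lee_addgt0Pr => e e0.
have e2 : (0 < e / 2)%R by rewrite divr_gt0.
have [sA [aA [bA [cA ->]]] hA] := lb_ereal_inf_adherent e2 fA.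
have [sB [aB [bB [cB ->]]] hB] := lb_ereal_inf_adherent e2 fB.
pose a k := if odd k then aB k./2 else aA k./2.
pose b k := if odd k then bB k./2 else bA k./2.
apply: (@le_trans _ _ (\sum_(k <oo) (boxvol (a k) (b k))%:E)).
  apply: ereal_inf_lbound; exists a, b; split => //.
  move=> x [/cA [k _ hk]|/cB [k _ hk]].
    exists k.*2 => //; by rewrite /a /b odd_double doubleK.
  exists k.*2.+1 => //; by rewrite /a /b /= odd_double /= uphalf_double.
have -> : \sum_(k <oo) (boxvol (a k) (b k))%:E =
  \sum_(k <oo) interl (fun k => (boxvol (aA k) (bA k))%:E) (fun k => (boxvol (aB k) (bB k))%:E) k.
  by apply: eq_eseriesr => k _; rewrite /a /b /interl; case: odd.
apply: le_trans; first by apply: interleave_le => k; rewrite lee_fin boxvol_ge0.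
apply: (@le_trans _ _ ((lebo A + (e / 2)%:E) + (lebo B + (e / 2)%:E))).
  by apply: leeD; apply: ltW.
rewrite -(fineK fA) -(fineK fB) -!EFinD lee_fin; lra.
Qed.
End Lebo.
Arguments boxvol_ge0 {R n}.
Arguments lebo_ge0 {R n}.
Arguments lebo_mono {R n}.
Arguments lebo_box {R n}.
Arguments sum_double {R}.
Arguments interl {R}.
Arguments interleave_le {R}.
Arguments lebo_union {R n}.


Section Geo.
Variables (R : realType) (n : nat).
Local Notation V := 'rV[R]_n.

Lemma dotvC (x y : V) : dotv x y = dotv y x.
Proof. by apply: eq_bigr => i _; rewrite mulrC. Qed.
Lemma dotvDl (x y z : V) : dotv (x + y) z = dotv x z + dotv y z.
Proof. by rewrite /dotv -big_split; apply: eq_bigr => i _; rewrite !mxE mulrDl. Qed.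
Lemma dotvZl a (x y : V) : dotv (a *: x) y = a * dotv x y.
Proof. by rewrite /dotv mulr_sumr; apply: eq_bigr => i _; rewrite !mxE mulrA. Qed.
Lemma dotvNl (x y : V) : dotv (- x) y = - dotv x y.
Proof. by rewrite -scaleN1r dotvZl mulN1r. Qed.
Lemma dotvDr (x y z : V) : dotv z (x + y) = dotv z x + dotv z y.
Proof. by rewrite dotvC dotvDl !(dotvC z). Qed.
Lemma dotvZr a (x y : V) : dotv y (a *: x) = a * dotv y x.
Proof. by rewrite dotvC dotvZl dotvC. Qed.
Lemma dotvNr (x y : V) : dotv y (- x) = - dotv y x.
Proof. by rewrite dotvC dotvNl dotvC. Qed.
Lemma dotv_ge0 (x : V) : 0 <= dotv x x.
Proof. by apply: sumr_ge0 => i _; rewrite -expr2 sqr_ge0. Qed.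

Definition dotvE := (dotvDl, dotvDr, dotvZl, dotvZr, dotvNl, dotvNr).

Lemma cs1 (w u : V) : dotv u u = 1 -> (dotv w u) ^+ 2 <= dotv w w.
Proof.
move=> uu; have := dotv_ge0 (w - dotv w u *: u).
rewrite !dotvE uu (dotvC u w); nra.
Qed.

Lemma reflpt_invol (H : ohyp R n) x : is_ohyp H -> reflpt H (reflpt H x) = x.
Proof.
rewrite /is_ohyp /reflpt => hu.
rewrite !dotvE hu; apply/rowP => i; rewrite !mxE; ring.
Qed.

Lemma reflset_invol (H : ohyp R n) A : is_ohyp H -> reflset H (reflset H A) = A.
Proof.
move=> hH; apply/seteqP; split => x; rewrite /reflset /= reflpt_invol //.
Qed.

Lemma reflpt_iso (H : ohyp R n) x y : is_ohyp H ->
  dotv (reflpt H x - reflpt H y) (reflpt H x - reflpt H y) = dotv (x - y) (x - y).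
Proof.
rewrite /is_ohyp /reflpt => hu.
have -> : x - (2 * (dotv x H.1 - H.2)) *: H.1 - (y - (2 * (dotv y H.1 - H.2)) *: H.1)
  = (x - y) - (2 * dotv (x - y) H.1) *: H.1.
  rewrite !dotvE; apply/rowP => i; rewrite !mxE; ring.
rewrite !dotvE hu !(dotvC H.1); ring.
Qed.

Lemma reflset_cball (H : ohyp R n) x r : is_ohyp H ->
  reflset H (cball x r) = cball (reflpt H x) r.
Proof.
move=> hH; apply/seteqP; split => z; rewrite /reflset /cball /=;
  have := reflpt_iso H z (reflpt H x) hH; rewrite reflpt_invol // => -> //.
Qed.

Lemma polarize_refl (H : ohyp R n) A : is_ohyp H ->
  polarize H (reflset H A) = polarize H A.
Proof.
move=> hH; rewrite /polarize reflset_invol //.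
by rewrite (setUC A) (setIC A).
Qed.
End Geo.
Arguments dotvC {R n}.
Arguments dotvDl {R n}.
Arguments dotvZl {R n}.
Arguments dotvNl {R n}.
Arguments dotvDr {R n}.
Arguments dotvZr {R n}.
Arguments dotvNr {R n}.
Arguments dotv_ge0 {R n}.
Arguments cs1 {R n}.
Arguments reflpt_invol {R n}.
Arguments reflset_invol {R n}.
Arguments reflpt_iso {R n}.
Arguments reflset_cball {R n}.
Arguments polarize_refl {R n}.


Section P1.
Variables (R : realType) (n : nat).
Local Notation V := 'rV[R]_n.

Lemma symdiff_tri (X Y Z : set V) : symdiff X Z `<=` symdiff Y X `|` symdiff Y Z.
Proof.
move=> x; rewrite /symdiff /=.
have [hy|hy] := pselect (Y x).
  by case=> -[hX hZ]; [right; left|left; left].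
by case=> -[hX hZ]; [left; right|right; right].
Qed.

Lemma null_tri (X Y Z : set V) :
  (lebo (symdiff X Z) <= lebo (symdiff Y X) + lebo (symdiff Y Z))%E.
Proof. exact: le_trans (lebo_mono _ _ (symdiff_tri X Y Z)) (lebo_union _ _). Qed.

Lemma part1 (E : set (set V)) (dm : set V -> set V) :
  (forall (x : V) (r : R), 0 < r -> E (cball x r)) ->
  seq_approx E dm ->
  exists H : ohyp R n, is_ohyp H /\
       forall (x : V) (r : R), 0 < r ->
         null_equiv (dm (cball x r)) (dm (reflset H (cball x r))).
Proof.
move=> Eb [hs [hh conv]]; exists (hs 0%N); split => // x r r0.
set B := cball x r; set B' := reflset (hs 0%N) B.
have EB : E B by exact: Eb.
have EB' : E B' by rewrite /B' /B reflset_cball //; exact: Eb.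
have eq : forall k, polcomp hs k.+1 B' = polcomp hs k.+1 B.
  elim => [|k IH] /=; first exact: polarize_refl.
  by move: IH => /= ->.
have cf := conv _ EB; have cg := conv _ EB'.
rewrite -cvg_shiftS in cf; rewrite -cvg_shiftS in cg.
have ch : (fun k => L1dist (polcomp hs k.+1 B) (dm B) + L1dist (polcomp hs k.+1 B') (dm B'))%E
   @ \oo --> (0 + 0)%E.
  by apply: cvgeD => //.
rewrite adde0 in ch.
rewrite /null_equiv; apply/eqP; rewrite eq_le lebo_ge0 andbT.
apply: (cvge_to_ge ch); apply: nearW => k /=.
move: (eq k) => /= ->; exact: null_tri.
Qed.
End P1.
Arguments null_tri {R n}. Arguments symdiff_tri {R n}. Arguments part1 {R n}.

Lemma lm_mono (R : realType) (A B : set R) : A `<=` B ->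
  (lebesgue_measure A <= lebesgue_measure B)%E.
Proof.
move=> AB; rewrite /lebesgue_measure /lebesgue_stieltjes_measure /measure_extension.
exact: le_outer_measure.
Qed.


Section Sep.
Variables (R : realType) (n : nat).
Local Notation V := 'rV[R]_n.

Definition dl : R := ((n.+1)%:R)^-1.
Definition sqbox (c : V) : set V := box (c - const_mx dl) (c + const_mx dl).

Lemma dl_gt0 : 0 < dl. Proof. by rewrite /dl invr_gt0 ltr0n. Qed.
Lemma ndl_le1 : n%:R * dl ^+ 2 <= 1.
Proof.
have h1 : n%:R * dl <= 1 :> R.
  by rewrite /dl ler_pdivrMr ?ltr0n // mul1r ler_nat.
have h2 : dl <= 1 by rewrite /dl invr_le1 ?ler1n ?unitfE ?pnatr_eq0 ?ltr0n.
have := dl_gt0; have : 0 <= n%:R :> R by [].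
nra.
Qed.

Lemma sqbox_near (c y : V) : sqbox c y -> dotv (y - c) (y - c) <= 1.
Proof.
move=> hy; apply: le_trans ndl_le1.
have -> : n%:R * dl ^+ 2 = \sum_(i < n) dl ^+ 2.
  by rewrite sumr_const card_ord mulr_natl.
apply: ler_sum => i _; have := hy i; rewrite !mxE => /andP[h1 h2].
have := dl_gt0; nra.
Qed.

Lemma sqbox_ball (c : V) : sqbox c `<=` cball c 1.
Proof. by move=> y /sqbox_near; rewrite /cball /= expr1n. Qed.

Lemma lebo_sqbox_gt0 (c : V) : (0 < lebo (sqbox c))%E.
Proof.
rewrite /sqbox; apply: (lt_le_trans _ (lebo_box _ _ _)).
  rewrite lte_fin; apply: prodr_gt0 => i _; rewrite !mxE.
  rewrite lt_max; apply/orP; right; have := dl_gt0; lra.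
move=> i; rewrite !mxE; have := dl_gt0; lra.
Qed.

Lemma not_null_sq (X Y : set V) c :
  sqbox c `<=` X -> (forall y, sqbox c y -> ~ Y y) -> ~ null_equiv X Y.
Proof.
move=> hX hY hn; have := lebo_sqbox_gt0 c.
have : (lebo (sqbox c) <= lebo (symdiff X Y))%E.
  by apply: lebo_mono => y hy; left; split; [exact: hX| exact: hY].
rewrite /null_equiv in hn; rewrite hn => h1 h2.
by have := lt_le_trans h2 h1; rewrite ltxx.
Qed.

Lemma sep (u c c' y : V) : dotv u u = 1 -> 9 <= (dotv (c - c') u) ^+ 2 ->
  sqbox c y -> ~ cball c' 1 y.
Proof.
move=> uu D9 hy hc.
have h1 := le_trans (cs1 (y - c) u uu) (sqbox_near _ _ hy).
have h2 : dotv (y - c') u ^+ 2 <= 1.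
  apply: le_trans (cs1 _ _ uu) _; move: hc; rewrite /cball /= expr1n //.
have e : dotv (y - c') u = dotv (y - c) u + dotv (c - c') u.
  by rewrite !dotvE; ring.
move: h2; rewrite e => h2.
have := sqr_ge0 (2 * dotv (y - c) u + dotv (c - c') u).
nra.
Qed.

Lemma far_balls (u c c' : V) : dotv u u = 1 -> 9 <= (dotv (c - c') u) ^+ 2 ->
  ~ null_equiv (cball c 1) (cball c' 1).
Proof.
move=> uu D9; apply: (not_null_sq _ _ c); first exact: sqbox_ball.
by move=> y hy; exact: (sep u c c' y uu D9 hy).
Qed.

Lemma null_sym (X Y : set V) : null_equiv X Y -> null_equiv Y X.
Proof. by rewrite /null_equiv /symdiff setUC. Qed.

Lemma null_trans (X Y Z : set V) : null_equiv X Y -> null_equiv Y Z -> null_equiv X Z.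
Proof.
move=> h1 h2; rewrite /null_equiv; apply/eqP; rewrite eq_le lebo_ge0 andbT.
have := null_tri X Y Z; rewrite (null_sym _ _ h1) h2 adde0 //.
Qed.

Lemma sol_radius_le1 (H0 : ohyp R n) (A : set V) w (al : R) :
  (forall s, line_slice H0 A w s -> al - 1 <= s <= al + 1) ->
  solynin_radius H0 A w <= 1.
Proof.
move=> hs; rewrite /solynin_radius; set S := [set r | _].
have [[r0 Sr0]|S0] := pselect (S !=set0); last first.
  have -> : S = set0 by apply/seteqP; split => // x Sx; apply: S0; exists x.
  by rewrite inf0.
apply: (le_trans (ge_inf _ Sr0)); first by exists 0 => r [].
case: Sr0 => r00 heq.
have h1 : (lebesgue_measure (`[(H0.2 - r0)%R, (H0.2 + r0)%R]%classic : set R) <=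
   lebesgue_measure (`[(H0.2 - r0)%R, (H0.2 + r0)%R]%classic `|`
      (line_slice H0 A w `&` `[H0.2, +oo[%classic)))%E.
  by apply: lm_mono => x hx; left.
rewrite heq itv_meas in h1.
have h2 := lm_mono _ (line_slice H0 A w) (`[al - 1, al + 1]%classic).
have h3 : ((Num.max 0 (H0.2 + r0 - (H0.2 - r0)))%:E <= (Num.max 0 (al + 1 - (al - 1)))%:E)%E.
  apply: (le_trans h1); rewrite -itv_meas; apply: h2 => s /hs hs'.
  by rewrite /= in_itv /=.
move: h3; rewrite lee_fin.
have -> : H0.2 + r0 - (H0.2 - r0) = 2 * r0 by ring.
have -> : al + 1 - (al - 1) = 2 by ring.
rewrite (_ : Num.max 0 (2 * r0) = 2 * r0); last by apply/max_idPr; rewrite mulr_ge0.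
rewrite (_ : Num.max 0 2 = 2 :> R); last by apply/max_idPr.
lra.
Qed.

Lemma sol_upper (H0 : ohyp R n) (c z : V) : is_ohyp H0 ->
  solynin H0 (cball c 1) z ->
  (H0.2 - 1 <= dotv z H0.1 <= H0.2 + 1) \/ cball c 1 z.
Proof.
move=> hu; rewrite /solynin /=.
set w := z - dotv z H0.1 *: H0.1.
have hr : solynin_radius H0 (cball c 1) w <= 1.
  apply: (sol_radius_le1 _ _ _ (dotv c H0.1 - dotv w H0.1)) => s.
  rewrite /line_slice /cball /= expr1n => hs.
  have := le_trans (cs1 _ _ hu) hs.
  rewrite !dotvE hu; nra.
case=> [/andP[h1 h2]|[_ h]]; last by right.
by left; apply/andP; split; lra.
Qed.
End Sep.
Arguments dl {R n}. Arguments sqbox {R n}. Arguments sqbox_near {R n}. Arguments sqbox_ball {R n}. Arguments not_null_sq {R n}. Arguments sep {R n}. Arguments far_balls {R n}. Arguments null_sym {R n}. Arguments null_trans {R n}. Arguments sol_upper {R n}. Arguments sol_radius_le1 {R n}. Arguments lebo_sqbox_gt0 {R n}.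


Section Main.
Variables (R : realType) (n : nat).
Local Notation V := 'rV[R]_n.

Lemma refl_diff (H : ohyp R n) (c : V) : is_ohyp H ->
  dotv (c - reflpt H c) H.1 = 2 * (dotv c H.1 - H.2).
Proof. by rewrite /is_ohyp /reflpt => hu; rewrite !dotvE hu; ring. Qed.

Lemma translate_cball (v x : V) r : translate v (cball x r) = cball (x + v) r.
Proof.
apply/seteqP; split => z; rewrite /translate /cball /=;
 (have -> : z - v - x = z - (x + v) by apply/rowP => i; rewrite !mxE; ring) => //.
Qed.

Lemma choose_c (u u0 : V) t tH : dotv u u = 1 -> dotv u0 u0 = 1 ->
  exists c : V, t + 3 <= dotv c u0 /\ 9 <= (2 * (dotv c u - tH)) ^+ 2.
Proof.
move=> hu hu0; set p := dotv u u0.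
have pC : dotv u0 u = p by rewrite /p dotvC.
have [p1|p1] := eqVneq (p ^+ 2) 1.
  exists ((t ^+ 2 + tH ^+ 2 + 5) *: u0); rewrite !dotvE hu0 pC; split; first nra.
  have : (p - 1) * (p + 1) = 0 by rewrite -subr_sqr p1 expr1n subrr.
  move/eqP; rewrite mulf_eq0 => /orP[/eqP h|/eqP h].
    have -> : p = 1 by lra.
    nra.
  have -> : p = -1 by lra.
  nra.
have hp : 1 - p ^+ 2 != 0 by rewrite subr_eq0 eq_sym.
pose be := (tH + 2 - (t + 3) * p) / (1 - p ^+ 2).
exists ((t + 3) *: u0 + be *: (u - p *: u0)).
rewrite !dotvE hu hu0 pC -/p; split.
  have -> : (t + 3) * 1 + be * (p + - (p * 1)) = t + 3 by ring.
  lra.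
have -> : (t + 3) * p + be * (1 + - (p * p)) = tH + 2.
  rewrite /be; field; exact: hp.
have -> : 2 * (tH + 2 - tH) = 4 by ring.
lra.
Qed.
End Main.
Arguments choose_c {R n}. Arguments refl_diff {R n}. Arguments translate_cball {R n}.

Theorem lemma5p3 (R : realType) (n : nat) (E : set (set 'rV[R]_n)) :
  (forall A, E A -> Ln A) ->
  (forall (x : 'rV[R]_n) (r : R), 0 < r -> E (cball x r)) ->
  (forall dm : set 'rV[R]_n -> set 'rV[R]_n,
     (forall A, E A -> Ln (dm A)) ->
     seq_approx E dm ->
     exists H : ohyp R n, is_ohyp H /\
       forall (x : 'rV[R]_n) (r : R), 0 < r ->
         null_equiv (dm (cball x r)) (dm (reflset H (cball x r))))
  /\ (forall v : 'rV[R]_n, ~ seq_approx E (translate v))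
  /\ (forall (b : R) (H0 : ohyp R n) (dm : set 'rV[R]_n -> set 'rV[R]_n),
        is_ohyp H0 -> 0 < b <= 1 ->
        (forall A, E A -> Ln (dm A)) -> brock_map b H0 dm ->
        ~ seq_approx E dm)
  /\ (forall H0 : ohyp R n, is_ohyp H0 -> ~ seq_approx E (solynin H0)).
Proof.
move=> _ Eb; split; first by move=> dm _ sa; exact: part1 E dm Eb sa.
split.
  move=> v sa; have [H [hH hn]] := part1 E _ Eb sa.
  pose x := (H.2 + 2) *: H.1.
  have := hn x 1 ltr01; rewrite reflset_cball // !translate_cball.
  apply: (far_balls H.1) => //.
  have -> : x + v - (reflpt H x + v) = x - reflpt H x.
    by apply/rowP => i; rewrite !mxE; ring.
  rewrite refl_diff // /x !dotvE hH; nra.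
split.
  move=> b H0 dm hH0 /andP[b0 b1] _ hb sa.
  have [H [hH hn]] := part1 E _ Eb sa.
  pose s := 2 / b.
  have sb : s * b = 2 by rewrite /s -mulrA mulVf ?mulr1 // gt_eqF.
  have s0 : 0 < s by rewrite /s divr_gt0.
  pose x := (H.2 + s) *: H.1.
  have h1 := hb x 1 ltr01.
  have h2 := hb (reflpt H x) 1 ltr01.
  have h3 := hn x 1 ltr01; rewrite reflset_cball // in h3.
  have h4 := null_trans _ _ _ (null_trans _ _ _ (null_sym _ _ h1) h3) h2.
  move: h4; apply: (far_balls H.1) => //.
  set p := dotv H.1 H0.1.
  have hp : p ^+ 2 <= 1 by rewrite /p; have := cs1 H.1 H0.1 hH0; rewrite hH.
  have pC : dotv H0.1 H.1 = p by rewrite /p dotvC.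
  have -> : dotv (x + ((b - 1) * (dotv x H0.1 - H0.2)) *: H0.1 -
     (reflpt H x + ((b - 1) * (dotv (reflpt H x) H0.1 - H0.2)) *: H0.1)) H.1
     = 2 * s * (1 + (b - 1) * p ^+ 2).
    rewrite /reflpt /x !dotvE hH pC -/p; ring.
  have : 2 * s * (1 + (b - 1) * p ^+ 2) >= 4.
    have : (1 - b) * (1 - p ^+ 2) >= 0 by apply: mulr_ge0; lra.
    nra.
  nra.
move=> H0 hH0 sa.
have [H [hH hn]] := part1 E _ Eb sa.
have [c [c1 c2]] := choose_c H.1 H0.1 H0.2 H.2 hH hH0.
have := hn c 1 ltr01; rewrite reflset_cball //.
apply: (not_null_sq _ _ c).
  move=> y hy; right; split; last exact: sqbox_ball.
  have := le_trans (cs1 (y - c) H0.1 hH0) (sqbox_near _ _ hy).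
  rewrite !dotvE; nra.
move=> y hy /(sol_upper _ _ _ hH0) [/andP[_ hy2]|hb].
  have := le_trans (cs1 (y - c) H0.1 hH0) (sqbox_near _ _ hy).
  rewrite !dotvE; nra.
apply: (sep H.1 c (reflpt H c) y hH _ hy hb).
by rewrite refl_diff.
Qed.
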